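(* Let $\alpha\in\mathbb{N}_0$ and let $L_{2\alpha+4,x}^{\alpha}y(x)=(-1)^{\alpha+1}e^x x\,D_x^{\alpha+2}\{e^{-x}D_x^{\alpha+2}[x^{\alpha+1}y(x)]\}$. Then for all $y,u\in C^{(2\alpha+4)}(0,\infty)$ and $x>0$: $$L_{2\alpha+4,x}^{\alpha}y(x)=(-1)^{\alpha+1}\prod_{j=0}^{\alpha+1}\Big\{L_{2,x}^{\alpha}-\frac{\alpha+1}{x}-j\Big\}y(x),\qquad L_{2\alpha+4,x}^{\alpha}[xu(x)]=(-1)^{\alpha+1}x\prod_{j=0}^{\alpha+1}\big\{L_{2,x}^{\alpha+2}-j-1\big\}u(x),$$ and $$L_{2\alpha+4,x}^{\alpha}y(x)=(-1)^{\alpha+1}\prod_{j=0}^{\alpha+1}\Big\{L_{2,x}^{2j-1}-\frac{2j}{x}-j\Big\}y(x),\qquad L_{2\alpha+4,x}^{\alpha}[xu(x)]=(-1)^{\alpha+1}x\prod_{j=0}^{\alpha+1}\big\{L_{2,x}^{2j+1}-j-1\big\}u(x).$$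
   Context: $D_x^i$ is the $i$-fold derivative. For real $\gamma$ (including $\gamma=-1$), $L_{2,x}^{\gamma}=xD_x^2+(\gamma+1-x)D_x$ (so $L_{2,x}^{-1}=x[D_x^2-D_x]$); terms like $-\frac{c}{x}$ act as multiplication operators. The product $\prod_{j=0}^{\alpha+1}\{A_j\}$ of differential expressions is non-commutative and means $A_{\alpha+1}A_{\alpha}\cdots A_1A_0$, i.e. the factors are applied successively to the function on the right in order $j=0,1,\dots,\alpha+1$. *)

(* Defs.v *)
From Stdlib Require Import Reals Lra ClassicalEpsilon.
Open Scope R_scope.

(* D_x f : the derivative of f, chosen by classical choice (arbitrary value
   at points where f is not differentiable; only used where it is). *)
Definition Dx (f : R -> R) : R -> R :=
  fun x => epsilon (inhabits 0) (fun l => derivable_pt_lim f x l).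

Definition Dn (i : nat) (f : R -> R) : R -> R := Nat.iter i Dx f.

Definition Cn_pos (n : nat) (f : R -> R) : Prop :=
  (forall k, (k < n)%nat -> forall x, 0 < x -> exists l, derivable_pt_lim (Dn k f) x l) /\
  (forall x, 0 < x -> continuity_pt (Dn n f) x).

Definition L2 (g : R) (f : R -> R) : R -> R :=
  fun x => x * Dn 2 f x + (g + 1 - x) * Dn 1 f x.

(* Non-commutative product: opprod A m = A_{m-1} ∘ ... ∘ A_1 ∘ A_0,
   so \prod_{j=0}^{a+1} {A_j} = opprod A (a+2). *)
Fixpoint opprod (A : nat -> (R -> R) -> (R -> R)) (m : nat) (f : R -> R) : R -> R :=
  match m with
  | O => f
  | S m' => A m' (opprod A m' f)
  end.

Definition Lhigh (a : nat) (y : R -> R) : R -> R :=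
  fun x => (-1) ^ (a + 1) * exp x * x *
    Dn (a + 2) (fun t => exp (- t) * Dn (a + 2) (fun s => s ^ (a + 1) * y s) t) x.

(* Main.v *)
Require Import Defs.
From Stdlib Require Import Reals Lra Lia ClassicalEpsilon FunctionalExtensionality PropExtensionality Setoid Morphisms.
Import Defs.
Open Scope R_scope.

Definition eqp (f g : R -> R) : Prop := forall t, 0 < t -> f t = g t.
Definition der (f : R -> R) : Prop := forall t, 0 < t -> exists l, derivable_pt_lim f t l.
Definition Reg (n : nat) (f : R -> R) : Prop :=
  forall k, (k < n)%nat -> der (Dn k f).

Lemma eqp_refl f : eqp f f. Proof. intros t _; reflexivity. Qed.
Lemma eqp_sym f g : eqp f g -> eqp g f. Proof. intros H t ht; symmetry; auto. Qed.
Lemma eqp_trans f g h : eqp f g -> eqp g h -> eqp f h.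
Proof. intros H1 H2 t ht; rewrite H1; auto. Qed.

Add Parametric Relation : (R -> R) eqp
  reflexivity proved by eqp_refl
  symmetry proved by eqp_sym
  transitivity proved by eqp_trans as eqp_rel.

Lemma Dx_spec f x l : derivable_pt_lim f x l -> Dx f x = l.
Proof.
  intros H. unfold Dx.
  pose proof (epsilon_spec (inhabits 0) (fun l => derivable_pt_lim f x l) (ex_intro _ l H)) as H'.
  eapply uniqueness_limite; eauto.
Qed.

Lemma dpl_local f g x l : eqp f g -> 0 < x -> derivable_pt_lim f x l -> derivable_pt_lim g x l.
Proof.
  intros E hx H eps heps. destruct (H eps heps) as [d Hd].
  assert (hd : 0 < Rmin d x) by (apply Rmin_pos; [apply (cond_pos d)|lra]).
  exists (mkposreal _ hd). intros h hh hlt. simpl in hlt.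
  assert (h1 : Rabs h < d) by (eapply Rlt_le_trans; [exact hlt|apply Rmin_l]).
  assert (h2 : Rabs h < x) by (eapply Rlt_le_trans; [exact hlt|apply Rmin_r]).
  rewrite <- (E x hx), <- (E (x+h)).
  - apply Hd; auto.
  - apply Rabs_def2 in h2. lra.
Qed.

Lemma Dx_ext f g : eqp f g -> eqp (Dx f) (Dx g).
Proof.
  intros E x hx. unfold Dx. f_equal. apply functional_extensionality; intro l.
  apply propositional_extensionality; split; apply dpl_local; auto.
  now apply eqp_sym.
Qed.

Instance Dx_proper : Proper (eqp ==> eqp) Dx.
Proof. intros f g H; now apply Dx_ext. Qed.

Lemma Dn_S k f : Dn (S k) f = Dx (Dn k f).
Proof. reflexivity. Qed.
Lemma Dn_S' k f : Dn (S k) f = Dn k (Dx f).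
Proof. unfold Dn. now rewrite Nat.iter_succ_r. Qed.

Instance Dn_proper k : Proper (eqp ==> eqp) (Dn k).
Proof. intros f g H. induction k. exact H. rewrite !Dn_S. now rewrite IHk. Qed.

Lemma der_ext f g : eqp f g -> der f -> der g.
Proof. intros E H t ht. destruct (H t ht) as [l Hl]. exists l. eapply dpl_local; eauto. Qed.

Lemma Reg_ext n f g : eqp f g -> Reg n f -> Reg n g.
Proof. intros E H k hk. apply (der_ext (Dn k f)); [now rewrite E|apply H; auto]. Qed.

Instance Reg_proper n : Proper (eqp ==> iff) (Reg n).
Proof. intros f g H; split; apply Reg_ext; auto. now apply eqp_sym. Qed.

Lemma Reg_S n f : Reg (S n) f <-> der f /\ Reg n (Dx f).
Proof.
  split.
  - intros H; split. apply (H 0%nat); lia. intros k hk. rewrite <- Dn_S'. apply H; lia.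
  - intros [H1 H2] k hk. destruct k. exact H1. rewrite Dn_S'. apply H2; lia.
Qed.

Lemma Reg_le m n f : (m <= n)%nat -> Reg n f -> Reg m f.
Proof. intros hm H k hk. apply H; lia. Qed.

Lemma Reg_0 f : Reg 0 f. Proof. intros k hk; lia. Qed.

Lemma Reg_der n f : Reg (S n) f -> der f.
Proof. intros H; apply Reg_S in H; tauto. Qed.
Lemma Reg_Dx n f : Reg (S n) f -> Reg n (Dx f).
Proof. intros H; apply Reg_S in H; tauto. Qed.
Lemma Reg_Dn m n f : Reg (m + n) f -> Reg n (Dn m f).
Proof.
  revert f; induction m; intros f H; [exact H|].
  rewrite Dn_S'. apply IHm. apply Reg_Dx. exact H.
Qed.

Lemma Dx_val f t : der f -> 0 < t -> derivable_pt_lim f t (Dx f t).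
Proof. intros H ht. destruct (H t ht) as [l Hl]. now rewrite (Dx_spec _ _ _ Hl). Qed.

Lemma Dx_add f g : der f -> der g -> eqp (Dx (fun t => f t + g t)) (fun t => Dx f t + Dx g t).
Proof. intros Hf Hg t ht. apply Dx_spec. apply (derivable_pt_lim_plus f g); now apply Dx_val. Qed.
Lemma Dx_sub f g : der f -> der g -> eqp (Dx (fun t => f t - g t)) (fun t => Dx f t - Dx g t).
Proof. intros Hf Hg t ht. apply Dx_spec. apply (derivable_pt_lim_minus f g); now apply Dx_val. Qed.
Lemma Dx_mul f g : der f -> der g -> eqp (Dx (fun t => f t * g t)) (fun t => Dx f t * g t + f t * Dx g t).
Proof. intros Hf Hg t ht. apply Dx_spec. apply (derivable_pt_lim_mult f g); now apply Dx_val. Qed.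
Lemma Dx_scal c f : der f -> eqp (Dx (fun t => c * f t)) (fun t => c * Dx f t).
Proof. intros Hf t ht. apply Dx_spec. apply (derivable_pt_lim_scal f c); now apply Dx_val. Qed.

Lemma der_add f g : der f -> der g -> der (fun t => f t + g t).
Proof. intros Hf Hg t ht. eexists. apply (derivable_pt_lim_plus f g); now apply Dx_val. Qed.
Lemma der_sub f g : der f -> der g -> der (fun t => f t - g t).
Proof. intros Hf Hg t ht. eexists. apply (derivable_pt_lim_minus f g); now apply Dx_val. Qed.
Lemma der_mul f g : der f -> der g -> der (fun t => f t * g t).
Proof. intros Hf Hg t ht. eexists. apply (derivable_pt_lim_mult f g); now apply Dx_val. Qed.

Lemma Reg_add n f g : Reg n f -> Reg n g -> Reg n (fun t => f t + g t).
Proof.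
  revert f g; induction n; intros f g Hf Hg. apply Reg_0.
  apply Reg_S. split. apply der_add; eapply Reg_der; eauto.
  rewrite Dx_add by (eapply Reg_der; eauto). apply IHn; now apply Reg_Dx.
Qed.
Lemma Reg_sub n f g : Reg n f -> Reg n g -> Reg n (fun t => f t - g t).
Proof.
  revert f g; induction n; intros f g Hf Hg. apply Reg_0.
  apply Reg_S. split. apply der_sub; eapply Reg_der; eauto.
  rewrite Dx_sub by (eapply Reg_der; eauto). apply IHn; now apply Reg_Dx.
Qed.
Lemma Reg_mul n f g : Reg n f -> Reg n g -> Reg n (fun t => f t * g t).
Proof.
  revert f g; induction n; intros f g Hf Hg. apply Reg_0.
  apply Reg_S. split. apply der_mul; eapply Reg_der; eauto.
  rewrite Dx_mul by (eapply Reg_der; eauto). apply Reg_add; apply IHn;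
  try (now apply Reg_Dx); eapply Reg_le; try eassumption; lia.
Qed.

Definition sm f := forall n, Reg n f.

Lemma Reg_smul n h f : sm h -> Reg n f -> Reg n (fun t => h t * f t).
Proof. intros Hh Hf. apply Reg_mul; auto. Qed.

Lemma Reg_zero n : Reg n (fun _ => 0).
Proof.
  induction n. apply Reg_0. apply Reg_S; split.
  - intros t _. eexists. apply derivable_pt_lim_const.
  - assert (E : eqp (Dx (fun _ => 0)) (fun _ => 0)).
    { intros t _. apply Dx_spec. apply derivable_pt_lim_const. }
    rewrite E. exact IHn.
Qed.
Lemma sm_const c : sm (fun _ => c).
Proof.
  intros n; destruct n. apply Reg_0. apply Reg_S; split.
  - intros t _. eexists. apply derivable_pt_lim_const.
  - assert (E : eqp (Dx (fun _ => c)) (fun _ => 0)).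
    { intros t _. apply Dx_spec. apply derivable_pt_lim_const. }
    rewrite E. apply Reg_zero.
Qed.
Lemma Reg_scal n c f : Reg n f -> Reg n (fun t => c * f t).
Proof. intros H. exact (Reg_mul n (fun _ => c) f (sm_const c n) H). Qed.

Lemma sm_step f g : der f -> eqp (Dx f) g -> (forall n, Reg n f -> Reg n g) -> sm f.
Proof.
  intros Hd He Hs n; induction n. apply Reg_0.
  apply Reg_S; split; auto. rewrite He. apply Hs. auto.
Qed.

Lemma dpl_expm t : derivable_pt_lim (fun s => exp (- s)) t (- exp (- t)).
Proof.
  replace (- exp (- t)) with (exp (- t) * (- 1)) by ring.
  apply (derivable_pt_lim_comp (fun s => - s) exp).
  - replace (-1) with (- (1)) by ring. apply (derivable_pt_lim_opp (fun s => s)). apply derivable_pt_lim_id.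
  - apply derivable_pt_lim_exp.
Qed.

Lemma dpl_inv t : 0 < t -> derivable_pt_lim (fun s => / s) t (- (/ t * / t)).
Proof.
  intros ht.
  assert (H := derivable_pt_lim_div (fun _ => 1) (fun s => s) t 0 1 (derivable_pt_lim_const 1 t) (derivable_pt_lim_id t) ltac:(lra)).
  unfold div_fct in H. replace (- (/ t * / t)) with ((0 * t - 1 * 1) / t²).
  - eapply (dpl_local (fun s => 1 / s)); eauto. intros s hs. unfold Rdiv; ring.
  - unfold Rsqr; field; lra.
Qed.

Lemma sm_exp : sm exp.
Proof.
  apply (sm_step exp exp); auto.
  - intros t _. eexists; apply derivable_pt_lim_exp.
  - intros t _. apply Dx_spec; apply derivable_pt_lim_exp.
Qed.

Lemma sm_expm : sm (fun s => exp (- s)).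
Proof.
  apply (sm_step _ (fun s => -1 * exp (- s))).
  - intros t _. eexists; apply dpl_expm.
  - intros t _. rewrite (Dx_spec _ _ _ (dpl_expm t)); ring.
  - intros n H; now apply Reg_scal.
Qed.

Lemma sm_inv : sm (fun s => / s).
Proof.
  apply (sm_step _ (fun s => -1 * (/ s * / s))).
  - intros t ht. eexists; apply dpl_inv; auto.
  - intros t ht. rewrite (Dx_spec _ _ _ (dpl_inv t ht)); ring.
  - intros n H; apply Reg_scal. now apply Reg_mul.
Qed.

Lemma sm_id : sm (fun s => s).
Proof.
  apply (sm_step _ (fun _ => 1)).
  - intros t _. eexists; apply derivable_pt_lim_id.
  - intros t _. apply Dx_spec, derivable_pt_lim_id.
  - intros n _; apply sm_const.
Qed.

Lemma sm_mul f g : sm f -> sm g -> sm (fun t => f t * g t).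
Proof. intros H1 H2 n. now apply Reg_mul. Qed.

Lemma sm_pow p : sm (fun s => s ^ p).
Proof.
  induction p. exact (sm_const 1). intros n. apply (Reg_mul n (fun s => s) (fun s => s ^ p)); auto. apply sm_id.
Qed.

Lemma sm_invpow p : sm (fun s => (/ s) ^ p).
Proof.
  induction p. exact (sm_const 1). intros n. apply (Reg_mul n (fun s => / s) (fun s => (/ s) ^ p)); auto. apply sm_inv.
Qed.

Definition fX (f : R -> R) : R -> R := fun t => t * f t.
Definition Eop (f : R -> R) : R -> R := fun t => Dx f t - f t.
Definition Epow (m : nat) (f : R -> R) : R -> R := Nat.iter m Eop f.

Lemma Epow_S m f : Epow (S m) f = Eop (Epow m f). Proof. reflexivity. Qed.
Lemma Epow_S' m f : Epow (S m) f = Epow m (Eop f).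
Proof. unfold Epow. now rewrite Nat.iter_succ_r. Qed.

Instance fX_proper : Proper (eqp ==> eqp) fX.
Proof. intros f g H t ht. unfold fX. now rewrite H. Qed.
Instance Eop_proper : Proper (eqp ==> eqp) Eop.
Proof. intros f g H t ht. unfold Eop. rewrite H by auto. now rewrite (Dx_ext f g H t ht). Qed.
Instance Epow_proper m : Proper (eqp ==> eqp) (Epow m).
Proof. intros f g H. induction m. exact H. rewrite !Epow_S. now rewrite IHm. Qed.

Lemma Reg_X n f : Reg n f -> Reg n (fX f).
Proof. intros H. apply (Reg_mul n (fun s => s) f); auto. apply sm_id. Qed.
Lemma Reg_Eop n f : Reg (S n) f -> Reg n (Eop f).
Proof. intros H. apply Reg_sub. now apply Reg_Dx. eapply Reg_le; [|exact H]; lia. Qed.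
Lemma Reg_Epow m n f : Reg (m + n) f -> Reg n (Epow m f).
Proof.
  revert f; induction m; intros f H; [exact H|].
  rewrite Epow_S'. apply IHm. apply Reg_Eop. exact H.
Qed.

Lemma der_Reg f : Reg 1 f -> der f.
Proof. apply Reg_der. Qed.
Lemma dpl_eq f t l l' : derivable_pt_lim f t l -> l = l' -> derivable_pt_lim f t l'.
Proof. intros H ->; exact H. Qed.
Lemma dplP f g t a b : derivable_pt_lim f t a -> derivable_pt_lim g t b -> derivable_pt_lim (fun s => f s + g s) t (a + b).
Proof. intros; now apply (derivable_pt_lim_plus f g). Qed.
Lemma dplB f g t a b : derivable_pt_lim f t a -> derivable_pt_lim g t b -> derivable_pt_lim (fun s => f s - g s) t (a - b).
Proof. intros; now apply (derivable_pt_lim_minus f g). Qed.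
Lemma dplM f g t a b : derivable_pt_lim f t a -> derivable_pt_lim g t b -> derivable_pt_lim (fun s => f s * g s) t (a * g t + f t * b).
Proof. intros; now apply (derivable_pt_lim_mult f g). Qed.
Lemma dplC c f t a : derivable_pt_lim f t a -> derivable_pt_lim (fun s => c * f s) t (c * a).
Proof. intros; now apply (derivable_pt_lim_scal f c). Qed.
Lemma dplX f t a : derivable_pt_lim f t a -> derivable_pt_lim (fun s => s * f s) t (f t + t * a).
Proof. intros H. eapply dpl_eq. apply (dplM (fun s => s) f). apply derivable_pt_lim_id. exact H. ring. Qed.
Lemma dplK c t : derivable_pt_lim (fun _ => c) t 0.
Proof. apply derivable_pt_lim_const. Qed.
Lemma dplI t : derivable_pt_lim (fun s => s) t 1.
Proof. apply derivable_pt_lim_id. Qed.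

Lemma RegD1 n f : Reg (S n) f -> der f.
Proof. apply Reg_der. Qed.

Ltac dv H := (apply Dx_val; [ eapply Reg_der; eapply Reg_le; [|exact H]; lia | assumption ]).

Lemma Dx_X f : der f -> eqp (Dx (fX f)) (fun t => f t + t * Dx f t).
Proof. intros Hf t ht. apply Dx_spec. unfold fX. apply dplX. now apply Dx_val. Qed.

Lemma Eop_X k : Reg 1 k -> eqp (Eop (fX k)) (fun t => k t + t * Eop k t).
Proof.
  intros Hk t ht. unfold Eop. rewrite (Dx_X k (Reg_der _ _ Hk) t ht). unfold fX. ring.
Qed.

Lemma Dn_X m g : Reg (S m) g -> eqp (Dn (S m) (fX g)) (fun t => INR (S m) * Dn m g t + t * Dn (S m) g t).
Proof.
  induction m; intros Hg.
  - intros t ht. change (Dn 1 (fX g) t) with (Dx (fX g) t). rewrite (Dx_X g (Reg_der _ _ Hg) t ht).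
    simpl. ring.
  - intros t ht. rewrite Dn_S. rewrite (Dx_ext _ _ (IHm (Reg_le (S m) (S (S m)) g ltac:(lia) Hg)) t ht).
    apply Dx_spec. eapply dpl_eq.
    + apply dplP. apply dplC. apply (Dx_val (Dn m g)); [apply (Hg m); lia | exact ht].
      apply dplX. apply (Dx_val (Dn (S m) g)); [apply (Hg (S m)); lia | exact ht].
    + rewrite <- !Dn_S. rewrite !S_INR. ring.
Qed.

Lemma Eop_ext_pt f g t : eqp f g -> 0 < t -> Eop f t = Eop g t.
Proof. intros H ht. now apply Eop_proper. Qed.

Lemma Epow_X m g : Reg (S m) g -> eqp (Epow (S m) (fX g)) (fun t => INR (S m) * Epow m g t + t * Epow (S m) g t).
Proof.
  induction m; intros Hg.
  - intros t ht. change (Epow 1 (fX g) t) with (Eop (fX g) t). rewrite (Eop_X g Hg t ht). simpl. ring.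
  - intros t ht. rewrite Epow_S. rewrite (Eop_ext_pt _ _ t (IHm (Reg_le (S m) (S (S m)) g ltac:(lia) Hg)) ht).
    assert (H1 : der (Epow m g)) by (apply (Reg_der 0); apply Reg_Epow; eapply Reg_le; [|exact Hg]; lia).
    assert (H2 : der (Epow (S m) g)) by (apply (Reg_der 0); apply Reg_Epow; eapply Reg_le; [|exact Hg]; lia).
    unfold Eop at 1. rewrite (Dx_spec _ _ _ (dplP _ _ _ _ _ (dplC _ _ _ _ (Dx_val _ t H1 ht)) (dplX _ _ _ (Dx_val _ t H2 ht)))).
    rewrite !Epow_S. unfold Eop. rewrite !S_INR. ring.
Qed.

Lemma Dx_Eop g : Reg 2 g -> eqp (Dx (Eop g)) (Eop (Dx g)).
Proof.
  intros Hg t ht. unfold Eop. apply Dx_spec. apply dplB.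
  - apply Dx_val; auto. apply (Hg 1%nat); lia.
  - apply Dx_val; auto. apply (Hg 0%nat); lia.
Qed.

Lemma Dx_Epow m g : Reg (S (S m)) g -> eqp (Dx (Epow m g)) (Epow m (Dx g)).
Proof.
  revert g; induction m; intros g Hg. reflexivity.
  rewrite !Epow_S'. rewrite IHm. rewrite Dx_Eop. reflexivity.
  eapply Reg_le; [|exact Hg]; lia. apply Reg_Eop. exact Hg.
Qed.

Lemma Eop_lin a b f g : der f -> der g -> eqp (Eop (fun t => a * f t + b * g t)) (fun t => a * Eop f t + b * Eop g t).
Proof.
  intros Hf Hg t ht. unfold Eop.
  rewrite (Dx_spec _ _ _ (dplP _ _ _ _ _ (dplC _ _ _ _ (Dx_val _ t Hf ht)) (dplC _ _ _ _ (Dx_val _ t Hg ht)))).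
  ring.
Qed.

Lemma Epow_lin m a b f g : Reg m f -> Reg m g -> eqp (Epow m (fun t => a * f t + b * g t)) (fun t => a * Epow m f t + b * Epow m g t).
Proof.
  induction m; intros Hf Hg. reflexivity.
  rewrite Epow_S. rewrite IHm by (eapply Reg_le; [|eassumption]; lia).
  apply Eop_lin; apply (Reg_der 0); apply Reg_Epow; eapply Reg_le; try eassumption; lia.
Qed.

Lemma Epow_Dx n v : Reg (S n) v -> eqp (Epow n (Dx v)) (fun t => Epow (S n) v t + Epow n v t).
Proof.
  intros Hv.
  assert (E : eqp (Dx v) (fun t => 1 * Eop v t + 1 * v t)) by (intros t _; unfold Eop; ring).
  rewrite E. rewrite Epow_lin. rewrite Epow_S'. intros t _; ring.
  now apply Reg_Eop. eapply Reg_le; [|eassumption]; lia.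
Qed.

Lemma Dn_expm m g : Reg m g -> eqp (Dn m (fun t => exp (- t) * g t)) (fun t => exp (- t) * Epow m g t).
Proof.
  induction m; intros Hg. reflexivity.
  rewrite Dn_S. rewrite IHm by (eapply Reg_le; [|eassumption]; lia).
  assert (H1 : der (Epow m g)) by (apply (Reg_der 0); apply Reg_Epow; eapply Reg_le; [|exact Hg]; lia).
  intros t ht. rewrite (Dx_spec _ _ _ (dplM _ _ _ _ _ (dpl_expm t) (Dx_val _ t H1 ht))).
  rewrite Epow_S. unfold Eop. ring.
Qed.

Lemma Dx_powmul p h : der h -> eqp (Dx (fun t => t ^ p * h t)) (fun t => INR p * t ^ (pred p) * h t + t ^ p * Dx h t).
Proof.
  intros Hh t ht. apply Dx_spec. eapply dpl_eq. apply (dplM (fun t => t ^ p) h). apply derivable_pt_lim_pow. now apply Dx_val. simpl. ring.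
Qed.

Instance L2_proper g : Proper (eqp ==> eqp) (L2 g).
Proof. intros f1 f2 H t ht. unfold L2. rewrite !(Dn_proper _ _ _ H t ht). reflexivity. Qed.

Lemma L2_E gm g : Reg 2 g -> eqp (L2 gm g) (fun t => Eop (fX (Dx g)) t + gm * Dx g t).
Proof.
  intros Hg t ht. unfold L2, Eop. assert (hd1 : der (Dx g)) by (apply (Hg 1%nat); lia). rewrite (Dx_X (Dx g) hd1 t ht).
  change (Dn 2 g t) with (Dx (Dx g) t). change (Dn 1 g t) with (Dx g t). unfold fX. ring.
Qed.

Lemma L2_X gm h : Reg 2 h -> eqp (L2 gm (fX h)) (fun t => t * L2 (gm + 2) h t + (gm + 1) * h t - t * h t).
Proof.
  intros Hh t ht. unfold L2.
  change (Dn 2 (fX h) t) with (Dx (Dx (fX h)) t). change (Dn 1 (fX h) t) with (Dx (fX h) t).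
  change (Dn 2 h t) with (Dx (Dx h) t). change (Dn 1 h t) with (Dx h t).
  assert (hd0 : der h) by (apply (Hh 0%nat); lia).
  assert (hd1 : der (Dx h)) by (apply (Hh 1%nat); lia).
  rewrite (Dx_ext _ _ (Dx_X h hd0) t ht). rewrite (Dx_X h hd0 t ht).
  rewrite (Dx_spec _ _ _ (dplP _ _ _ _ _ (Dx_val _ t hd0 ht) (dplX _ _ _ (Dx_val _ t hd1 ht)))).
  unfold fX. ring.
Qed.

Lemma L2_lin gm c f g : Reg 2 f -> Reg 2 g -> eqp (L2 gm (fun t => f t - c * g t)) (fun t => L2 gm f t - c * L2 gm g t).
Proof.
  intros Hf Hg t ht. unfold L2.
  change (Dn 2 (fun t => f t - c * g t) t) with (Dx (Dx (fun t => f t - c * g t)) t).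
  change (Dn 1 (fun t => f t - c * g t) t) with (Dx (fun t => f t - c * g t) t).
  change (Dn 2 f t) with (Dx (Dx f) t). change (Dn 1 f t) with (Dx f t).
  change (Dn 2 g t) with (Dx (Dx g) t). change (Dn 1 g t) with (Dx g t).
  assert (f0 : der f) by (apply (Hf 0%nat); lia).
  assert (f1 : der (Dx f)) by (apply (Hf 1%nat); lia).
  assert (g0 : der g) by (apply (Hg 0%nat); lia).
  assert (g1 : der (Dx g)) by (apply (Hg 1%nat); lia).
  assert (E : eqp (Dx (fun t => f t - c * g t)) (fun t => Dx f t - c * Dx g t)).
  { intros s hs. apply Dx_spec. apply dplB. now apply Dx_val. apply dplC. now apply Dx_val. }
  rewrite (Dx_ext _ _ E t ht), (E t ht).
  rewrite (Dx_spec _ _ _ (dplB _ _ _ _ _ (Dx_val _ t f1 ht) (dplC _ _ _ _ (Dx_val _ t g1 ht)))).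
  ring.
Qed.

Lemma L2_reg gm k f : Reg (k + 2) f -> Reg k (L2 gm f).
Proof.
  intros Hf. unfold L2. apply Reg_add.
  - apply (Reg_mul k (fun t => t)). apply sm_id. apply Reg_Dn. now rewrite Nat.add_comm.
  - apply (Reg_mul k (fun t => gm + 1 - t)).
    + apply (Reg_sub k (fun _ => gm + 1) (fun t => t)). apply sm_const. apply sm_id.
    + apply Reg_Dn. eapply Reg_le; [|exact Hf]; lia.
Qed.
Definition T (n : nat) (u : R -> R) : R -> R := Epow n (Dn n (fun t => t ^ n * u t)).

Lemma Reg_pmul n p f : Reg n f -> Reg n (fun t => t ^ p * f t).
Proof. intros H. apply (Reg_mul n (fun t => t ^ p)); auto. apply sm_pow. Qed.

Lemma S4 n u : Reg (2 * n + 2) u ->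
  eqp (T (S n) u) (fun t => L2 (2 * INR n + 1) (T n u) t - INR n * T n u t - T n u t).
Proof.
  intros Hu.
  pose (w := fun t => t ^ n * u t).
  assert (Hw : Reg (2 * n + 2) w) by (apply Reg_pmul; auto).
  pose (v := Dn n w).
  assert (Hv : Reg (S (S n)) v) by (apply Reg_Dn; eapply Reg_le; [|exact Hw]; lia).
  assert (Hdv : Reg (S n) (Dx v)) by (apply Reg_Dx; eapply Reg_le; [|exact Hv]; lia).
  unfold T.
  assert (E1 : eqp (fun t => t ^ S n * u t) (fX w)) by (intros t _; unfold fX, w; simpl; ring).
  rewrite E1. rewrite (Dn_X n w) by (eapply Reg_le; [|exact Hw]; lia).
  change (Dn n (fun t => t ^ n * u t)) with v.
  assert (E2 : eqp (fun t => INR (S n) * Dn n w t + t * Dn (S n) w t)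
                  (fun t => INR (S n) * v t + 1 * fX (Dx v) t)) by (intros t _; unfold fX, v; simpl; ring).
  rewrite E2. rewrite Epow_lin.
  2: { eapply Reg_le; [|exact Hv]; lia. }
  2: { now apply Reg_X. }
  intros t ht.
  rewrite (Epow_X n (Dx v) Hdv t ht).
  assert (HE : Reg 2 (Epow n v)) by (apply Reg_Epow; eapply Reg_le; [|exact Hv]; lia).
  rewrite (L2_E _ _ HE t ht).
  rewrite (Eop_proper _ _ (fX_proper _ _ (Dx_Epow n v Hv)) t ht).
  rewrite (Dx_Epow n v Hv t ht).
  assert (HE2 : Reg 1 (Epow n (Dx v))) by (apply Reg_Epow; eapply Reg_le; [|exact Hdv]; lia).
  rewrite (Eop_X _ HE2 t ht). rewrite <- Epow_S.
  rewrite (Epow_Dx n v ltac:(eapply Reg_le; [|exact Hv]; lia) t ht).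
  rewrite !S_INR. ring.
Qed.

Lemma opprod_S A m f : opprod A (S m) f = A m (opprod A m f).
Proof. reflexivity. Qed.

Lemma opprod_proper A m : (forall j, (j < m)%nat -> Proper (eqp ==> eqp) (A j)) ->
  Proper (eqp ==> eqp) (opprod A m).
Proof.
  intros HA. induction m; intros f g H. exact H.
  rewrite !opprod_S. apply HA. lia. apply IHm; auto.
Qed.

Lemma opprod_ext_fam A B m f : (forall j, (j < m)%nat -> forall g, eqp (A j g) (B j g)) ->
  (forall j, (j < m)%nat -> Proper (eqp ==> eqp) (B j)) ->
  eqp (opprod A m f) (opprod B m f).
Proof.
  intros HAB HB. induction m. reflexivity.
  rewrite !opprod_S. rewrite HAB by lia. apply HB. lia. apply IHm; intros; [apply HAB|apply HB]; lia.
Qed.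

Lemma opprod_reg A m : (forall j k f, (j < m)%nat -> Reg (k + 2) f -> Reg k (A j f)) ->
  forall k f, Reg (k + 2 * m) f -> Reg k (opprod A m f).
Proof.
  induction m; intros HA k f Hf. eapply Reg_le; [|exact Hf]; lia.
  rewrite opprod_S. apply HA. lia. apply IHm. intros; apply HA; auto; lia.
  eapply Reg_le; [|exact Hf]; lia.
Qed.

Lemma opprod_shift A m f : opprod A (S m) f = opprod (fun j => A (S j)) m (A 0%nat f).
Proof. induction m. reflexivity. rewrite opprod_S, IHm. reflexivity. Qed.

Definition AF (gm : R) (c : nat -> R) (j : nat) (f : R -> R) : R -> R := fun t => L2 gm f t - c j * f t.

Instance AF_proper gm c j : Proper (eqp ==> eqp) (AF gm c j).
Proof. intros f g H t ht. unfold AF. rewrite (L2_proper gm f g H t ht), (H t ht). reflexivity. Qed.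

Lemma AF_reg gm c j k f : Reg (k + 2) f -> Reg k (AF gm c j f).
Proof.
  intros H. unfold AF. apply Reg_sub. now apply L2_reg. apply Reg_scal. eapply Reg_le; [|exact H]; lia.
Qed.

Lemma AF_comm gm c d f : Reg 4 f -> eqp (AF gm c 0%nat (AF gm d 0%nat f)) (AF gm d 0%nat (AF gm c 0%nat f)).
Proof.
  intros H. unfold AF.
  assert (H2 : Reg 2 f) by (eapply Reg_le; [|exact H]; lia).
  assert (H2' : Reg 2 (L2 gm f)) by (apply L2_reg; exact H).
  intros t ht.
  rewrite (L2_lin gm (d 0%nat) (L2 gm f) f H2' H2 t ht).
  rewrite (L2_lin gm (c 0%nat) (L2 gm f) f H2' H2 t ht).
  ring.
Qed.

Lemma R1 gm c d m f : Reg (2 * m + 2) f ->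
  eqp (AF gm d 0%nat (opprod (AF gm c) m f)) (opprod (AF gm c) m (AF gm d 0%nat f)).
Proof.
  induction m; intros Hf. reflexivity.
  rewrite !opprod_S.
  assert (Hr : Reg 4 (opprod (AF gm c) m f)).
  { apply opprod_reg. intros; now apply AF_reg. eapply Reg_le; [|exact Hf]; lia. }
  pose proof (AF_comm gm (fun _ => d 0%nat) (fun _ => c m) _ Hr) as Hc. unfold AF in Hc |- *.
  rewrite Hc. fold (AF gm c m (AF gm d 0%nat (opprod (AF gm c) m f))).
  fold (AF gm c m (opprod (AF gm c) m (AF gm d 0%nat f))).
  apply AF_proper. apply IHm. eapply Reg_le; [|exact Hf]; lia.
Qed.
Lemma R3 gm m : forall c f, Reg (2 * m) f ->
  eqp (opprod (AF gm c) m f) (opprod (AF gm (fun j => c (m - 1 - j)%nat)) m f).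
Proof.
  induction m; intros c f Hf. reflexivity.
  rewrite opprod_S.
  rewrite (AF_proper gm c m _ _ (IHm c f ltac:(eapply Reg_le; [|exact Hf]; lia))).
  assert (E0 : eqp (AF gm c m (opprod (AF gm (fun j => c (m - 1 - j)%nat)) m f))
                   (AF gm (fun _ => c m) 0%nat (opprod (AF gm (fun j => c (m - 1 - j)%nat)) m f))) by reflexivity.
  rewrite E0. rewrite R1 by (eapply Reg_le; [|exact Hf]; lia).
  rewrite opprod_shift.
  replace (fun j => AF gm (fun j0 => c (S m - 1 - j0)%nat) (S j)) with (AF gm (fun j => c (m - 1 - j)%nat)).
  2: { apply functional_extensionality; intro j. unfold AF.
       replace (S m - 1 - S j)%nat with (m - 1 - j)%nat by lia. reflexivity. }
  apply opprod_proper. intros; apply AF_proper.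
  intros t _. unfold AF. replace (S m - 1 - 0)%nat with m by lia. reflexivity.
Qed.

Definition V (n m : nat) (f : R -> R) : R -> R :=
  Epow m (fun t => (/ t) ^ (n - m) * Dn m (fun s => s ^ n * f s) t).

Lemma invpow_pow p t : 0 < t -> (/ t) ^ p * t ^ p = 1.
Proof.
  intros ht. rewrite <- Rpow_mult_distr. rewrite Rinv_l by lra. apply pow1.
Qed.

Lemma Vstep n m f : (m < n)%nat -> Reg (2 * n) f ->
  eqp (V n (S m) f) (AF (INR n) (fun j => INR n - INR j) m (V n m f)).
Proof.
  intros hmn Hf.
  pose (P := fun s => s ^ n * f s).
  assert (HP : Reg (2 * n) P) by (apply Reg_pmul; auto).
  pose (w := Dn m P).
  assert (Hw : Reg (2 * n - m) w) by (apply Reg_Dn; eapply Reg_le; [|exact HP]; lia).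
  pose (p := (n - m)%nat).
  pose (h := fun t => (/ t) ^ p * w t).
  assert (Hh : Reg (S (S m)) h).
  { apply (Reg_mul _ (fun t => (/ t) ^ p)). apply sm_invpow. eapply Reg_le; [|exact Hw]; lia. }
  assert (Hwh : eqp w (fun t => t ^ p * h t)).
  { intros t ht. unfold h. rewrite <- Rmult_assoc, (Rmult_comm (t ^ p)), invpow_pow; auto; ring. }
  assert (hd : der h) by (apply (Hh 0%nat); lia).
  assert (C1 : eqp (fun t => (/ t) ^ (n - S m) * Dn (S m) P t) (fun t => INR p * h t + 1 * fX (Dx h) t)).
  { intros t ht. rewrite Dn_S. fold w. rewrite (Dx_ext _ _ Hwh t ht). rewrite (Dx_powmul p h hd t ht).
    unfold fX. replace (n - S m)%nat with (pred p) by (unfold p; lia).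
    assert (Hp : p = S (pred p)) by (unfold p; lia).
    rewrite Hp at 3 4. simpl.
    replace ((/ t) ^ pred p * (INR p * t ^ pred p * h t + t * t ^ pred p * Dx h t))
      with (((/ t) ^ pred p * t ^ pred p) * (INR p * h t + t * Dx h t)) by ring.
    rewrite invpow_pow by auto. ring. }
  unfold V. rewrite Epow_S. fold P. rewrite <- Epow_S. rewrite C1.
  rewrite Epow_lin.
  2: { eapply Reg_le; [|exact Hh]; lia. }
  2: { apply Reg_X. apply Reg_Dx. eapply Reg_le; [|exact Hh]; lia. }
  assert (Hhm : eqp (fun t => (/ t) ^ (n - m) * Dn m (fun s => s ^ n * f s) t) h) by reflexivity.
  change (fun t => (/ t) ^ (n - m) * Dn m P t) with h.
  assert (Hdh : Reg (S m) (Dx h)) by (apply Reg_Dx; eapply Reg_le; [|exact Hh]; lia).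
  intros t ht. unfold AF.
  rewrite (Epow_X m (Dx h) Hdh t ht).
  assert (HE : Reg 2 (Epow m h)) by (apply Reg_Epow; eapply Reg_le; [|exact Hh]; lia).
  rewrite (L2_E _ _ HE t ht).
  rewrite (Eop_proper _ _ (fX_proper _ _ (Dx_Epow m h Hh)) t ht).
  rewrite (Dx_Epow m h Hh t ht).
  assert (HE2 : Reg 1 (Epow m (Dx h))) by (apply Reg_Epow; eapply Reg_le; [|exact Hdh]; lia).
  rewrite (Eop_X _ HE2 t ht). rewrite <- Epow_S.
  rewrite (Epow_Dx m h ltac:(eapply Reg_le; [|exact Hh]; lia) t ht).
  unfold p. rewrite minus_INR by lia. rewrite !S_INR. ring.
Qed.

Lemma Vchain n f : Reg (2 * n) f -> forall m, (m <= n)%nat ->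
  eqp (opprod (AF (INR n) (fun j => INR n - INR j)) m f) (V n m f).
Proof.
  intros Hf m. induction m; intros hm.
  - intros t ht. unfold V. simpl. rewrite Nat.sub_0_r.
    rewrite <- Rmult_assoc, invpow_pow by auto. ring.
  - rewrite opprod_S. rewrite IHm by lia. symmetry. apply Vstep; auto.
Qed.

Lemma Vfull n f : eqp (V n n f) (T n f).
Proof. unfold V, T. apply Epow_proper. intros t _. rewrite Nat.sub_diag. simpl. ring. Qed.
Lemma S4chain N u : Reg (2 * N) u -> forall m, (m <= N)%nat ->
  eqp (opprod (fun j f t => L2 (2 * INR j + 1) f t - INR j * f t - f t) m u) (T m u).
Proof.
  intros Hu m. induction m; intros hm. { intros t _. unfold T. simpl. ring. }
  rewrite opprod_S. intros t ht. cbv beta.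
  rewrite (L2_proper _ _ _ (IHm ltac:(lia)) t ht), (IHm ltac:(lia) t ht).
  symmetry. apply S4; auto. eapply Reg_le; [|exact Hu]; lia.
Qed.

Lemma S2full a u : Reg (2 * (a + 2)) u ->
  eqp (opprod (fun j f t => L2 (INR a + 2) f t - INR j * f t - f t) (a + 2) u) (T (a + 2) u).
Proof.
  intros Hu.
  rewrite (opprod_ext_fam _ (AF (INR a + 2) (fun j => INR j + 1))).
  2: { intros j _ g t _. unfold AF. ring. }
  2: { intros; apply AF_proper. }
  rewrite R3 by exact Hu.
  rewrite (opprod_ext_fam _ (AF (INR (a + 2)) (fun j => INR (a + 2) - INR j))).
  2: { intros j hj g t _. unfold AF. rewrite plus_INR. simpl (INR 2).
       rewrite minus_INR by lia. rewrite minus_INR by lia. rewrite plus_INR. simpl (INR 2). simpl (INR 1).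
       replace (1 + 1) with 2 by ring. ring. }
  2: { intros; apply AF_proper. }
  rewrite Vchain by (auto; lia). apply Vfull.
Qed.

Lemma Lhigh_ext a y1 y2 x : eqp y1 y2 -> 0 < x -> Lhigh a y1 x = Lhigh a y2 x.
Proof.
  intros H hx. unfold Lhigh. f_equal. apply Dn_proper; auto.
  intros t ht. f_equal. apply Dn_proper; auto. intros s hs. now rewrite H.
Qed.

Lemma Lhigh_X a u x : Reg (2 * (a + 2)) u -> 0 < x ->
  Lhigh a (fun t => t * u t) x = (-1) ^ (a + 1) * x * T (a + 2) u x.
Proof.
  intros Hu hx. unfold Lhigh.
  replace (fun s => s ^ (a + 1) * (s * u s)) with (fun s => s ^ (a + 2) * u s).
  2: { apply functional_extensionality; intro s. replace (a + 2)%nat with (S (a + 1)) by lia. simpl. ring. }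
  rewrite (Dn_expm (a + 2) _).
  2: { apply Reg_Dn. apply Reg_pmul. eapply Reg_le; [|exact Hu]; lia. }
  2: exact hx.
  unfold T. assert (He : exp x * exp (- x) = 1) by (rewrite <- exp_plus; replace (x + - x) with 0 by ring; apply exp_0).
  transitivity ((-1) ^ (a + 1) * (exp x * exp (- x)) * x * Epow (a + 2) (Dn (a + 2) (fun s => s ^ (a + 2) * u s)) x).
  ring. rewrite He. ring.
Qed.

Lemma conj_opprod A B m h :
  (forall j, (j < m)%nat -> forall g, Reg 2 g -> eqp (A j (fX g)) (fX (B j g))) ->
  (forall j, (j < m)%nat -> Proper (eqp ==> eqp) (A j)) ->
  (forall j k f, (j < m)%nat -> Reg (k + 2) f -> Reg k (B j f)) ->
  Reg (2 * m) h -> eqp (opprod A m (fX h)) (fX (opprod B m h)).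
Proof.
  intros HAB HA HB. induction m; intros Hh. reflexivity.
  rewrite !opprod_S. transitivity (A m (fX (opprod B m h))).
  - apply HA. lia. apply IHm.
    + intros; apply HAB; auto; lia.
    + intros; apply HA; lia.
    + intros; apply HB; auto; lia.
    + eapply Reg_le; [|exact Hh]; lia.
  - apply HAB. lia. apply opprod_reg. intros; apply HB; auto; lia. eapply Reg_le; [|exact Hh]; lia.
Qed.
Lemma Reg_of_Cn n f : Cn_pos n f -> Reg n f.
Proof. intros [H _] k hk. exact (H k hk). Qed.

Lemma A1_conj a j g : Reg 2 g ->
  eqp ((fun j f t => L2 (INR a) f t - (INR a + 1) / t * f t - INR j * f t) j (fX g))
      (fX ((fun j f t => L2 (INR a + 2) f t - INR j * f t - f t) j g)).
Proof.
  intros Hg t ht. cbv beta. rewrite (L2_X _ g Hg t ht). unfold fX. field. lra.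
Qed.

Lemma A3_conj j g : Reg 2 g ->
  eqp ((fun j f t => L2 (2 * INR j - 1) f t - 2 * INR j / t * f t - INR j * f t) j (fX g))
      (fX ((fun j f t => L2 (2 * INR j + 1) f t - INR j * f t - f t) j g)).
Proof.
  intros Hg t ht. cbv beta. rewrite (L2_X _ g Hg t ht).
  replace (2 * INR j - 1 + 2) with (2 * INR j + 1) by ring. unfold fX. field. lra.
Qed.

Lemma Lform_proper gm c d : Proper (eqp ==> eqp) (fun f t => L2 gm f t - c t * f t - d * f t).
Proof. intros f g H t ht. rewrite (L2_proper gm f g H t ht), (H t ht). reflexivity. Qed.

Lemma Lform_reg gm d k f : Reg (k + 2) f -> Reg k (fun t => L2 gm f t - d * f t - f t).
Proof.
  intros H. apply Reg_sub. apply Reg_sub. now apply L2_reg. apply Reg_scal.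
  eapply Reg_le; [|exact H]; lia. eapply Reg_le; [|exact H]; lia.
Qed.

Ltac prp := let f := fresh in let g := fresh in let H := fresh in let t := fresh in let ht := fresh in
  intros f g H t ht; cbv beta; rewrite (L2_proper _ f g H t ht), (H t ht); reflexivity.

Theorem theorem3p1 (a : nat) (y u : R -> R) (x : R) :
  Cn_pos (2 * a + 4) y -> Cn_pos (2 * a + 4) u -> 0 < x ->
  Lhigh a y x =
    (-1) ^ (a + 1) *
    opprod (fun j f t => L2 (INR a) f t - (INR a + 1) / t * f t - INR j * f t)
           (a + 2) y x
  /\
  Lhigh a (fun t => t * u t) x =
    (-1) ^ (a + 1) * x *
    opprod (fun j f t => L2 (INR a + 2) f t - INR j * f t - f t) (a + 2) u x
  /\
  Lhigh a y x =
    (-1) ^ (a + 1) *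
    opprod (fun j f t => L2 (2 * INR j - 1) f t - 2 * INR j / t * f t - INR j * f t)
           (a + 2) y x
  /\
  Lhigh a (fun t => t * u t) x =
    (-1) ^ (a + 1) * x *
    opprod (fun j f t => L2 (2 * INR j + 1) f t - INR j * f t - f t) (a + 2) u x.
Proof.
  intros Hy Hu hx.
  assert (Ru : Reg (2 * (a + 2)) u) by (eapply Reg_le; [|apply Reg_of_Cn; exact Hu]; lia).
  assert (Ry : Reg (2 * (a + 2)) y) by (eapply Reg_le; [|apply Reg_of_Cn; exact Hy]; lia).
  pose (v := fun t => / t * y t).
  assert (Rv : Reg (2 * (a + 2)) v) by (apply (Reg_mul _ (fun t => / t)); auto; apply sm_inv).
  assert (Eyv : eqp y (fX v)) by (intros t ht; unfold fX, v; field; lra).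
  assert (Lyv : Lhigh a y x = Lhigh a (fun t => t * v t) x) by (apply Lhigh_ext; auto).
  assert (P1 : eqp (opprod (fun j f t => L2 (INR a) f t - (INR a + 1) / t * f t - INR j * f t) (a + 2) y)
                   (fX (opprod (fun j f t => L2 (INR a + 2) f t - INR j * f t - f t) (a + 2) v))).
  { transitivity (opprod (fun j f t => L2 (INR a) f t - (INR a + 1) / t * f t - INR j * f t) (a + 2) (fX v)).
    apply opprod_proper; [intros; prp | exact Eyv].
    apply conj_opprod; auto.
    - intros; apply A1_conj; auto.
    - intros; prp.
    - intros; apply Lform_reg; auto. }
  assert (P3 : eqp (opprod (fun j f t => L2 (2 * INR j - 1) f t - 2 * INR j / t * f t - INR j * f t) (a + 2) y)
                   (fX (opprod (fun j f t => L2 (2 * INR j + 1) f t - INR j * f t - f t) (a + 2) v))).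
  { transitivity (opprod (fun j f t => L2 (2 * INR j - 1) f t - 2 * INR j / t * f t - INR j * f t) (a + 2) (fX v)).
    apply opprod_proper; [intros; prp | exact Eyv].
    apply conj_opprod; auto.
    - intros; apply A3_conj; auto.
    - intros; prp.
    - intros; apply Lform_reg; auto. }
  split; [|split; [|split]].
  - rewrite Lyv, Lhigh_X by auto. rewrite (P1 x hx). unfold fX.
    rewrite <- (S2full a v Rv x hx). ring.
  - rewrite Lhigh_X by auto. now rewrite (S2full a u Ru x hx).
  - rewrite Lyv, Lhigh_X by auto. rewrite (P3 x hx). unfold fX.
    rewrite (S4chain (a + 2) v Rv (a + 2) (le_n _) x hx). ring.
  - rewrite Lhigh_X by auto. now rewrite (S4chain (a + 2) u Ru (a + 2) (le_n _) x hx).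
Qed.
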